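(* Let $k$ and $n$ be positive integers and let $\ell$ be a positive divisor of $n$. Then in $\mathbb{Q}((T))$, $$\mathbf{B}^k(\ell T)\,\mathbf{B}(nT)=\ell^{k}T^{k}\,\mathbf{B}(nT)\,f^{(k)}_{\ell,n}(e^T)+\frac{n}{\ell}\,\mathbf{B}^{k+1}(\ell T)\,h^{(k)}_{\ell,n}(e^T).$$
   Context: $\mathbf{B}(T)=T/(e^T-1)\in\mathbb{Q}[[T]]$, $\mathbf{B}(cT)=cT/(e^{cT}-1)$ for $0\ne c\in\mathbb{Q}$, and $\mathbf{B}^j(cT)=(\mathbf{B}(cT))^j$. For positive integers $k,n$, the polynomials $h^{(k)}_{1,n},f^{(k)}_{1,n}\in\mathbb{Q}[X]$ are the (unique) polynomials with $\deg h^{(k)}_{1,n}<k$ and $\deg f^{(k)}_{1,n}<n-1$ such that $$\frac{1}{(X-1)^k(1+X+\cdots+X^{n-1})}=\frac{h^{(k)}_{1,n}}{(X-1)^k}+\frac{f^{(k)}_{1,n}}{1+X+\cdots+X^{n-1}}.$$ For a positive divisor $\ell$ of $n$, set $h^{(k)}_{\ell,n}=h^{(k)}_{1,n/\ell}(X^\ell)$ and $f^{(k)}_{\ell,n}=f^{(k)}_{1,n/\ell}(X^\ell)$. *)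

(* Defs.v *)
(* Formal power series over Q are represented as coefficient
   functions nat -> rat (coefficient of T^m). *)
From HB Require Import structures.
From mathcomp Require Import all_boot all_order all_algebra.
Set Implicit Arguments. Unset Strict Implicit. Unset Printing Implicit Defensive.
Import Order.TTheory GRing.Theory Num.Theory.
Local Open Scope ring_scope.

Definition ps := nat -> rat.

Definition ps_one : ps := fun m => (m == 0%N)%:R.
Definition ps_add (a b : ps) : ps := fun m => a m + b m.
Definition ps_scale (c : rat) (a : ps) : ps := fun m => c * a m.
Definition ps_mul (a b : ps) : ps := fun m => \sum_(i < m.+1) a i * b (m - i)%N.
Definition ps_pow (a : ps) (j : nat) : ps := iter j (ps_mul a) ps_one.
Definition ps_Tpow (k : nat) (a : ps) : ps :=
  fun m => if (k <= m)%N then a (m - k)%N else 0.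

Fixpoint ps_inv_seq (a : ps) (m : nat) : seq rat :=
  match m with
  | 0 => [:: (a 0%N)^-1]
  | m'.+1 => let s := ps_inv_seq a m' in
      rcons s (- (a 0%N)^-1 * \sum_(i < m'.+1) a i.+1 * nth 0 s (m' - i)%N)
  end.
Definition ps_inv (a : ps) : ps := fun m => nth 0 (ps_inv_seq a m) m.

Definition ps_exp (c : rat) : ps := fun m => c ^+ m / (m`!)%:R.

(* (e^{cT} - 1)/(cT) = sum_m c^m/(m+1)! T^m  (for c <> 0) *)
Definition ps_expm1_div (c : rat) : ps := fun m => c ^+ m / (m.+1`!)%:R.

(* B(cT) = cT/(e^{cT}-1) = ((e^{cT}-1)/(cT))^{-1} *)
Definition bernB (c : rat) : ps := ps_inv (ps_expm1_div c).

(* p(e^T) = sum_i p_i e^{iT} for a polynomial p *)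
Definition poly_at_exp (p : {poly rat}) : ps :=
  fun m => \sum_(i < size p) p`_i * ps_exp i%:R m.

Definition geomX (n : nat) : {poly rat} := \sum_(i < n) 'X^i.

Definition tofracP (p : {poly rat}) : {fraction {poly rat}} := FracField.tofrac p.

(* h, f are the polynomials h^{(k)}_{1,n}, f^{(k)}_{1,n}:
   deg h < k, deg f < n-1, and in Q(X)
   1/((X-1)^k (1+...+X^{n-1})) = h/(X-1)^k + f/(1+...+X^{n-1}). *)
Definition is_hf (k n : nat) (h f : {poly rat}) : Prop :=
  [/\ (size h <= k)%N, (size f <= n.-1)%N &
      (tofracP (('X - 1) ^+ k * geomX n))^-1
      = tofracP h / tofracP (('X - 1) ^+ k) + tofracP f / tofracP (geomX n)
      :> {fraction {poly rat}}].

(* Main.v *)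
From Stdlib Require Import FunctionalExtensionality.
Require Import Defs.
From HB Require Import structures.
From mathcomp Require Import all_boot all_order all_algebra.
From mathcomp Require boolp.
From mathcomp Require Import ring.
Set Implicit Arguments. Unset Strict Implicit. Unset Printing Implicit Defensive.
Import Order.TTheory GRing.Theory Num.Theory.
Local Open Scope ring_scope.

Definition PS := ps.
HB.instance Definition _ := boolp.gen_eqMixin PS.
HB.instance Definition _ := boolp.gen_choiceMixin PS.

Definition ps_zero : PS := fun _ => 0.
Definition ps_opp (a : PS) : PS := fun m => - a m.

Lemma ps_addA : associative (ps_add : PS -> PS -> PS).
Proof. by move=> a b c; apply: functional_extensionality => m; rewrite /ps_add addrA. Qed.
Lemma ps_addC : commutative (ps_add : PS -> PS -> PS).
Proof. by move=> a b; apply: functional_extensionality => m; rewrite /ps_add addrC. Qed.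
Lemma ps_add0 : left_id ps_zero (ps_add : PS -> PS -> PS).
Proof. by move=> a; apply: functional_extensionality => m; rewrite /ps_add /ps_zero add0r. Qed.
Lemma ps_addN : left_inverse ps_zero ps_opp (ps_add : PS -> PS -> PS).
Proof. by move=> a; apply: functional_extensionality => m; rewrite /ps_add /ps_zero /ps_opp addNr. Qed.

HB.instance Definition _ := GRing.isZmodule.Build PS ps_addA ps_addC ps_add0 ps_addN.

Definition tr (N : nat) (a : ps) : {poly rat} := \poly_(i < N) a i.

Lemma coef_tr N a i : (tr N a)`_i = if (i < N)%N then a i else 0.
Proof. by rewrite coef_poly. Qed.

Lemma trM N a b m : (m < N)%N -> ps_mul a b m = (tr N a * tr N b)`_m.
Proof.
move=> mN; rewrite coefM /ps_mul.
apply: eq_bigr => i _.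
have iN : (i < N)%N by apply: leq_ltn_trans mN; rewrite -ltnS.
have iN' : (m - i < N)%N by apply: leq_ltn_trans mN; rewrite leq_subr.
by rewrite /tr !coef_poly iN iN'.
Qed.

Lemma coefM_congr N (p q r : {poly rat}) m :
  (forall i, (i < N)%N -> p`_i = q`_i) -> (m < N)%N -> (p * r)`_m = (q * r)`_m.
Proof.
move=> H mN; rewrite !coefM; apply: eq_bigr => i _; rewrite H //.
by apply: leq_ltn_trans mN; rewrite -ltnS.
Qed.

Lemma ps_mulA : associative (ps_mul : PS -> PS -> PS).
Proof.
move=> a b c; apply: functional_extensionality => m.
rewrite (trM (N:=m.+1)) // [RHS](trM (N:=m.+1)) //.
rewrite (coefM_congr (N:=m.+1) (p := tr m.+1 (ps_mul a b)) (q := tr m.+1 a * tr m.+1 b)) //; last first.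
  by move=> i im; rewrite coef_tr im (trM (N:=m.+1)).
rewrite [tr m.+1 a * tr m.+1 (ps_mul b c)]mulrC (coefM_congr (N:=m.+1) (p := tr m.+1 (ps_mul b c)) (q := tr m.+1 b * tr m.+1 c)) //; last first.
  by move=> i im; rewrite coef_tr im (trM (N:=m.+1)).
by rewrite [tr m.+1 b * _ * _]mulrC mulrA.
Qed.

Lemma ps_mulC : commutative (ps_mul : PS -> PS -> PS).
Proof.
move=> a b; apply: functional_extensionality => m.
by rewrite (trM (N:=m.+1)) // [RHS](trM (N:=m.+1)) // mulrC.
Qed.

Lemma ps_mul1 : left_id (ps_one : PS) ps_mul.
Proof.
move=> a; apply: functional_extensionality => m.
by rewrite /ps_mul big_ord_recl /= /ps_one /= mul1r subn0 big1 ?addr0 // => i _; rewrite mul0r.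
Qed.

Lemma ps_mulDl : left_distributive (ps_mul : PS -> PS -> PS) ps_add.
Proof.
move=> a b c; apply: functional_extensionality => m.
by rewrite /ps_mul /ps_add -big_split; apply: eq_bigr => i _; rewrite mulrDl.
Qed.

Lemma ps_one_neq0 : (ps_one : PS) != ps_zero.
Proof.
apply/negP => /eqP H; have := congr1 (fun f => f 0%N) H.
by rewrite /ps_one /ps_zero /= => /eqP; rewrite oner_eq0.
Qed.

HB.instance Definition _ := GRing.Zmodule_isComNzRing.Build PS
  ps_mulA ps_mulC ps_mul1 ps_mulDl ps_one_neq0.

Lemma mulE (a b : PS) : ps_mul a b = a * b. Proof. by []. Qed.
Lemma addE (a b : PS) : ps_add a b = a + b. Proof. by []. Qed.
Lemma oneE : ps_one = 1 :> PS. Proof. by []. Qed.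
Lemma powE (a : PS) j : ps_pow a j = a ^+ j.
Proof. elim: j => [|j IH] //=; by rewrite exprS -IH. Qed.

Lemma sumE I (r : seq I) (P : pred I) (F : I -> PS) m :
  (\sum_(i <- r | P i) F i) m = \sum_(i <- r | P i) F i m.
Proof. by elim/big_rec2: _ => // i y1 y2 _ <-. Qed.

Lemma size_inv_seq a m : size (ps_inv_seq a m) = m.+1.
Proof. by elim: m => //= m IH; rewrite size_rcons IH. Qed.

Lemma nth_inv_seq a m i : (i <= m)%N -> nth 0 (ps_inv_seq a m) i = ps_inv a i.
Proof.
elim: m => [|m IH]; first by rewrite leqn0 => /eqP ->.
rewrite leq_eqVlt => /orP [/eqP -> //| im].
by rewrite /= nth_rcons size_inv_seq im IH.
Qed.

Lemma ps_invS a m : ps_inv a m.+1 =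
  - (a 0%N)^-1 * \sum_(i < m.+1) a i.+1 * ps_inv a (m - i)%N.
Proof.
rewrite /ps_inv /= nth_rcons size_inv_seq ltnn eqxx; congr (_ * _).
by apply: eq_bigr => i _; rewrite nth_inv_seq // leq_subr.
Qed.

Lemma ps_invP (a : PS) : a 0%N != 0 -> a * ps_inv a = 1.
Proof.
move=> a0; apply: functional_extensionality => m.
rewrite -mulE /ps_mul /ps_one; case: m => [|m].
  by rewrite big_ord1 /ps_inv /= divrr ?unitfE.
rewrite big_ord_recl subn0 ps_invS /=.
under [X in _ + X]eq_bigr => i _ do rewrite /bump /= add1n subSS.
by rewrite mulrA mulrN divrr ?unitfE // mulN1r addNr.
Qed.

Definition cst (c : rat) : PS := ps_scale c (1 : PS).

Lemma cstM_l c (a : PS) : cst c * a = ps_scale c a.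
Proof.
apply: functional_extensionality => m.
rewrite -mulE /ps_mul big_ord_recl /= big1 ?addr0.
  by rewrite /cst /ps_scale /= subn0 mulr1.
by move=> i _; rewrite /cst /ps_scale /= mulr0 mul0r.
Qed.

Lemma cst_morph : monoid_morphism cst.
Proof.
split.
  by apply: functional_extensionality => m; rewrite /cst /ps_scale mul1r.
move=> x y; rewrite cstM_l; apply: functional_extensionality => m.
by rewrite /cst /ps_scale mulrA.
Qed.

Lemma cst_add : nmod_morphism cst.
Proof.
split.
  by apply: functional_extensionality => m; rewrite /cst /ps_scale mul0r.
move=> x y; apply: functional_extensionality => m.
by rewrite /cst /ps_scale -addE /ps_add mulrDl.
Qed.

HB.instance Definition _ := GRing.isNmodMorphism.Build rat PS cst cst_add.
HB.instance Definition _ := GRing.isMonoidMorphism.Build rat PS cst cst_morph.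

Definition TT : PS := ps_Tpow 1 (1 : PS).

Lemma mulT (a : PS) m : (TT * a) m = if m is m'.+1 then a m' else 0.
Proof.
rewrite -mulE /ps_mul; case: m => [|m].
  by rewrite big_ord1 /TT /ps_Tpow /= mul0r.
rewrite big_ord_recl /TT /ps_Tpow /= mul0r add0r big_ord_recl /= subn1 /=.
have b0 : forall n, bump 0 n = n.+1 by [].
rewrite mul1r big1 ?addr0; first by rewrite b0 subSS subn0.
by move=> i _; rewrite !b0 subn1 /= mul0r.
Qed.

Lemma TpowE k (a : PS) : ps_Tpow k a = TT ^+ k * a.
Proof.
elim: k => [|k IH].
  by rewrite expr0 mul1r; apply: functional_extensionality => m; rewrite /ps_Tpow subn0.
rewrite exprS -mulrA -IH; apply: functional_extensionality => m.
rewrite mulT; case: m => [|m] //.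
Qed.

Lemma T_cancel (a b : PS) : TT * a = TT * b -> a = b.
Proof.
move=> H; apply: functional_extensionality => m.
by have := congr1 (fun f : PS => f m.+1) H; rewrite !mulT.
Qed.

Definition EE (c : rat) : PS := ps_exp c.

Lemma EE0 : EE 0 = 1.
Proof.
apply: functional_extensionality => m; rewrite /EE /ps_exp.
by case: m => [|m]; rewrite ?expr0 ?divr1 // expr0n /= mul0r.
Qed.

Lemma EED c d : EE c * EE d = EE (c + d).
Proof.
apply: functional_extensionality => m.
rewrite -mulE /ps_mul /EE /ps_exp exprDn mulr_suml.
rewrite [RHS](reindex_inj rev_ord_inj) /=.
apply: eq_bigr => i _.
have im : (i <= m)%N by rewrite -ltnS.
rewrite subSS subKn // bin_sub //.
have := bin_fact im; move/(congr1 (fun x => x%:R : rat)).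
rewrite !natrM => Hf.
have f0 : forall j, (j`!)%:R != 0 :> rat by move=> j; rewrite pnatr_eq0 -lt0n fact_gt0.
have c0 : ('C(m, i))%:R != 0 :> rat by rewrite pnatr_eq0 -lt0n bin_gt0.
rewrite -mulr_natr -Hf.
field.
by rewrite !f0 c0.
Qed.

Definition DD (c : rat) : PS := ps_expm1_div c.

Lemma bernP c : (bernB c : PS) * DD c = 1.
Proof.
rewrite mulrC; apply: ps_invP.
by rewrite /DD /ps_expm1_div expr0 /=.
Qed.

Lemma DDP c : TT * (cst c * DD c) = EE c - 1.
Proof.
apply: functional_extensionality => m; rewrite mulT cstM_l.
rewrite -addE /ps_add; case: m => [|m].
  by rewrite /EE /ps_exp expr0 divr1 /= subrr.
rewrite /ps_scale /DD /ps_expm1_div /EE /ps_exp exprS mulrA.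
have -> : ((-1 : PS) m.+1) = - 0 by [].
by rewrite oppr0 addr0.
Qed.

Lemma cst_inj : injective cst.
Proof.
move=> x y H; have := congr1 (fun f : PS => f 0%N) H.
by rewrite /cst /ps_scale /= !mulr1.
Qed.

Lemma EEn i : EE 1 ^+ i = EE i%:R.
Proof.
elim: i => [|i IH]; first by rewrite expr0 EE0.
by rewrite exprS IH EED -natr1 addrC.
Qed.

Lemma PAE p : poly_at_exp p = (map_poly cst p).[EE 1].
Proof.
rewrite horner_coef size_map_inj_poly ?rmorph0 //; last exact: cst_inj.
apply: functional_extensionality => m.
rewrite sumE /poly_at_exp; apply: eq_bigr => i _.
by rewrite coef_map /= EEn cstM_l.
Qed.
Lemma key (R : comNzRingType) (T y ym Dl Dn Bl Bn hy fy Gy cl cm cn cli : R) k :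
  Bl * Dl = 1 -> Bn * Dn = 1 -> T * (cl * Dl) = y - 1 -> T * (cn * Dn) = ym - 1 ->
  ym - 1 = (y - 1) * Gy -> 1 = hy * Gy + fy * (y - 1) ^+ k ->
  cn = cl * cm -> cli * cl = 1 -> (forall a b, T * a = T * b -> a = b) ->
  Bl ^+ k * Bn = cl ^+ k * (T ^+ k * (Bn * fy)) + cm * (Bl ^+ k.+1 * hy).
Proof.
move=> H1 H2 H3 H4 H5 H6 H7 H8 Tc.
have BG : Bn * Gy = cm * Bl.
  have e : Bn * Gy * Dl * cl = cl * cm.
    apply: Tc.
    transitivity (Bn * Gy * (T * (cl * Dl))); first by ring.
    rewrite H3; transitivity (Bn * ((y - 1) * Gy)); first by ring.
    rewrite -H5 -H4.
    transitivity (T * cn * (Bn * Dn)); first by ring.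
    by rewrite H2 mulr1 H7.
  transitivity ((Bn * Gy * Dl * cl) * Bl * cli).
    transitivity (Bn * Gy * (Bl * Dl) * (cli * cl)); first by rewrite H1 H8 !mulr1.
    by ring.
  rewrite e.
  transitivity (cm * Bl * (cli * cl)); first by ring.
  by rewrite H8 mulr1.
transitivity (Bl ^+ k * Bn * (hy * Gy + fy * (T * (cl * Dl)) ^+ k)).
  by rewrite H3 -H6 mulr1.
transitivity (cl ^+ k * (T ^+ k * (Bn * fy)) * (Bl * Dl) ^+ k + Bl ^+ k * hy * (cm * Bl)).
  rewrite -BG !exprMn; move: (Bl ^+ k) (T ^+ k) (cl ^+ k) (Dl ^+ k) => a b c d; ring.
by rewrite H1 expr1n mulr1 exprSr; move: (Bl ^+ k) => a; ring.
Qed.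
Lemma fr (F : fieldType) (a b p g : F) : p != 0 -> g != 0 ->
  (p * g)^-1 = a / p + b / g -> 1 = a * g + b * p.
Proof.
move=> p0 g0 H.
have : (p * g) * (p * g)^-1 = (p * g) * (a / p + b / g) by rewrite H.
rewrite divff ?mulf_neq0 // => ->.
by field; rewrite p0 g0.
Qed.

Lemma hf_poly k m h f : (0 < m)%N -> is_hf k m h f ->
  1 = h * geomX m + f * ('X - 1) ^+ k.
Proof.
move=> m0 [_ _ H].
have P0 : ('X - 1) ^+ k != 0 :> {poly rat}.
  by rewrite expf_neq0 // -polyC1 -size_poly_eq0 size_XsubC.
have G0 : geomX m != 0.
  apply/negP => /eqP G0; have := congr1 (horner^~ 1) G0.
  rewrite horner0 /geomX horner_sum.
  under eq_bigr do rewrite hornerXn expr1n.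
  by rewrite sumr_const card_ord => /eqP; rewrite pnatr_eq0; apply/negP; rewrite -lt0n.
apply/eqP; rewrite -(@tofrac_eq _ 1) eq_sym; apply/eqP.
have PF : tofracP (('X - 1) ^+ k) != 0 by rewrite /tofracP tofrac_eq0.
have GF : tofracP (geomX m) != 0 by rewrite /tofracP tofrac_eq0.
rewrite tofrac1.
have e : tofracP (('X - 1) ^+ k * geomX m) = tofracP (('X - 1) ^+ k) * tofracP (geomX m).
  by rewrite /tofracP tofracM.
rewrite e in H.
have -> : FracField.tofrac (h * geomX m + f * ('X - 1) ^+ k) =
  tofracP h * tofracP (geomX m) + tofracP f * tofracP (('X - 1) ^+ k).
  by rewrite /tofracP tofracD !tofracM.
exact: esym (fr PF GF H).
Qed.

Theorem mainTheorem5 (k n l : nat) (h f : {poly rat}) :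
  (0 < k)%N -> (0 < n)%N -> (0 < l)%N -> (l %| n)%N ->
  is_hf k (n %/ l) h f ->
  ps_mul (ps_pow (bernB l%:R) k) (bernB n%:R)
  =1 ps_add
       (ps_scale (l%:R ^+ k)
          (ps_Tpow k (ps_mul (bernB n%:R) (poly_at_exp (f \Po 'X^l)))))
       (ps_scale ((n %/ l)%:R)
          (ps_mul (ps_pow (bernB l%:R) k.+1) (poly_at_exp (h \Po 'X^l)))).
Proof.
move=> k0 n0 l0 ln Hhf x; apply: (congr1 (fun F : ps => F x)).
have nlm : n = (l * (n %/ l))%N by rewrite mulnC divnK.
have m0 : (0 < n %/ l)%N by rewrite divn_gt0 // dvdn_leq.
have Hp := hf_poly m0 Hhf.
move: Hhf Hp; set m := (n %/ l)%N => Hhf Hp.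
rewrite -!cstM_l !TpowE !mulE !powE !addE !PAE.
rewrite !map_comp_poly map_polyXn !horner_comp hornerXn rmorphXn !rmorph_nat.
set y := EE 1 ^+ l.
have yl : y = EE l%:R by rewrite /y EEn.
pose Gy := (map_poly cst (geomX m)).[y].
have GyE : Gy = \sum_(i < m) y ^+ i.
  rewrite /Gy /geomX rmorph_sum horner_sum; apply: eq_bigr => i _.
  by rewrite /= map_polyXn hornerXn.
apply: (@key _ TT y (y ^+ m) (DD l%:R) (DD n%:R) _ _ _ _ Gy _ _ (n%:R : PS) (cst (l%:R^-1))).
- exact: bernP.
- exact: bernP.
- by rewrite -(rmorph_nat cst) DDP yl.
- by rewrite -(rmorph_nat cst) DDP /y -exprM -nlm EEn.
- by rewrite subrX1 GyE.
- transitivity ((map_poly cst (h * geomX m + f * ('X - 1) ^+ k)).[y]).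
    by rewrite -Hp rmorph1 hornerC.
  rewrite rmorphD !rmorphM rmorphXn rmorphB /= map_polyX rmorph1 hornerD !hornerM.
  by rewrite horner_exp hornerD hornerN hornerX hornerC.
- by rewrite nlm natrM.
- rewrite -(rmorph_nat cst) -rmorphM mulVf ?rmorph1 //.
  by rewrite pnatr_eq0 -lt0n.
- exact: T_cancel.
Qed.
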